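(* For all $r,s\in\mathbb{N}$ and all $a\in(0,1]$, $$\bar c_{2rs}(E(a,1))\le\bar c_{2r}(E(a,1)),$$ where $\bar c_k:=c_k^{\mathrm{EH}}/\bigl(\bigl[\tfrac{k+1}2\bigr]\pi\bigr)$ is the normalized $k$-th Ekeland–Hofer capacity on ellipsoids in $\mathbb{R}^4$.
   Context: $E(a_1,a_2)=\{z\in\mathbb{C}^2:|z_1|^2/a_1+|z_2|^2/a_2<1\}$. Ekeland–Hofer capacities on ellipsoids: writing the numbers $j a_i\pi$ ($j\in\mathbb{N}$, $i=1,2$) in increasing order with repetitions as $d_1\le d_2\le\dots$, $c_k^{\mathrm{EH}}(E(a_1,a_2))=d_k$. $[x]$ is the largest integer $\le x$. *)

(* Defs.v *)
From mathcomp Require Import all_boot all_order all_algebra.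
From mathcomp Require Import reals trigo.
Set Implicit Arguments. Unset Strict Implicit. Unset Printing Implicit Defensive.
Import Order.TTheory GRing.Theory Num.Theory.
Local Open Scope ring_scope.

Section EH.
Variable R : realType.

(* The first k multiples j*a_i*pi (j = 1..k) for i = 1, 2.  The k smallest
   elements (with repetitions) of the full multiset {j a_i pi : j >= 1, i=1,2}
   all occur among these (since a_i > 0), so sorting this finite list and
   taking its k-th entry gives d_k. *)
Definition EH_list (a1 a2 : R) (k : nat) : seq R :=
  [seq j%:R * a1 * pi | j <- iota 1 k] ++ [seq j%:R * a2 * pi | j <- iota 1 k].

Definition cEH (a1 a2 : R) (k : nat) : R :=
  nth 0 (sort <=%R (EH_list a1 a2 k)) k.-1.

Definition cEHbar (a1 a2 : R) (k : nat) : R :=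
  cEH a1 a2 k / (((k.+1)./2)%:R * pi).

End EH.

(* Main.v *)
Require Import Defs.
From mathcomp Require Import all_boot all_order all_algebra.
From mathcomp Require Import reals trigo.
From mathcomp Require Import zify ring.
Import Order.TTheory GRing.Theory Num.Theory.
Local Open Scope ring_scope.

Section Aux.
Variable R : realType.

Lemma block_count (c x : R) (s k : nat) : 0 <= c ->
  (s * count (fun j : nat => (j%:R * c * pi <= x)%R) (iota 1 k) <=
   count (fun j : nat => (j%:R * c * pi <= s%:R * x)%R) (iota 1 (k * s)))%N.
Proof.
move=> c0; elim: k => [|k IH]; first by rewrite muln0.
rewrite mulSnr iotaD count_cat -[k.+1]addn1 iotaD count_cat /= addn0 mulnDr.
apply: leq_add => //.
case H: (X in (s * nat_of_bool X)%N); last by rewrite muln0.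
rewrite muln1.
have : all (fun j : nat => j%:R * c * pi <= s%:R * x) (iota (1 + k * s) s).
  apply/allP => j; rewrite mem_iota => /andP [_ Hj].
  have Hj' : (j <= k.+1 * s)%N by rewrite mulSnr; rewrite addnC in Hj; lia.
  apply: (le_trans (y := (k.+1 * s)%:R * c * pi)).
    apply: ler_wpM2r; first exact: ltW (pi_gt0 R).
    apply: ler_wpM2r => //; by rewrite ler_nat.
  rewrite mulnC natrM -!mulrA; apply: ler_wpM2l => //.
  by rewrite mulrA; rewrite add1n in H.
by rewrite all_count => /eqP ->; rewrite size_iota.
Qed.

Lemma nth_sort_le (L : seq R) (k : nat) (y : R) : (0 < k)%N ->
  (k <= count (fun z => (z <= y)%R) L)%N -> nth 0 (sort <=%R L) k.-1 <= y.
Proof.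
move=> k0 Hk; set S := sort <=%R L.
have HS : sorted <=%R S by apply: sort_sorted; exact: le_total.
have Hc : count (fun z => z <= y) S = count (fun z => z <= y) L.
  exact: (permP (permEl (perm_sort _ L))).
rewrite leNgt; apply/negP => Hlt.
have Hsz : (k.-1 < size S)%N.
  rewrite leqNgt; apply/negP => Hs.
  have := count_size (fun z => z <= y) S; rewrite Hc; lia.
have : count (fun z => z <= y) (drop k.-1 S) = 0%N.
  apply/eqP; rewrite -leqn0 leqNgt -has_count; apply/negP => /hasP [z].
  move=> /(nthP 0) [i Hi <-]; rewrite nth_drop.
  rewrite size_drop in Hi.
  have Hi' : (k.-1 + i < size S)%N by rewrite -ltn_subRL.
  have Hle := sorted_leq_nth le_trans lexx 0 HS k.-1 (k.-1 + i)%N Hsz Hi' (leq_addr _ _).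
  move=> Hz; have := le_trans Hle Hz; by rewrite leNgt Hlt.
have := count_size (fun z => z <= y) (take k.-1 S).
rewrite size_take Hsz.
have := congr1 (count (fun z => z <= y)) (cat_take_drop k.-1 S).
rewrite count_cat Hc; move: Hk k0; lia.
Qed.

Lemma count_nth_sort (L : seq R) (k : nat) : (0 < k)%N -> (k <= size L)%N ->
  (k <= count (fun z => (z <= nth 0 (sort <=%R L) k.-1)%R) L)%N.
Proof.
move=> k0 Hk; set S := sort <=%R L; set t := nth 0 S k.-1.
have HS : sorted <=%R S by apply: sort_sorted; exact: le_total.
have <- : count (fun z => z <= t) S = count (fun z => z <= t) L.
  exact: (permP (permEl (perm_sort _ L))).
have HsS : size S = size L by rewrite size_sort.
rewrite -(cat_take_drop k S) count_cat.
have : all (fun z => z <= t) (take k S).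
  apply/allP => z /(nthP 0) [i Hi <-].
  rewrite size_takel ?HsS // in Hi.
  rewrite nth_take //; apply: (sorted_leq_nth le_trans lexx 0 HS); rewrite ?inE /= ?HsS; lia.
rewrite all_count => /eqP ->; rewrite size_takel ?HsS //; lia.
Qed.

Lemma simp_aux (x y z w : R) : y != 0 -> (y * x) / (z * y * w) = x / (z * w).
Proof.
move=> y0; have [->|z0] := eqVneq z 0; first by rewrite !mul0r invr0 !mulr0.
have [->|w0] := eqVneq w 0; first by rewrite !mulr0 invr0 !mulr0.
by field; rewrite y0 z0 w0.
Qed.

End Aux.

Theorem mainTheorem7 (R : realType) (r s : nat) (a : R) :
  (0 < r)%N -> (0 < s)%N -> 0 < a -> a <= 1 ->
  cEHbar a 1 (2 * r * s) <= cEHbar a 1 (2 * r).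
Proof.
move=> r0 s0 a0 a1.
set t := cEH a 1 (2 * r).
have Ht : (2 * r <= count (fun z => (z <= t)%R) (EH_list a 1 (2 * r)))%N.
  apply: count_nth_sort; first lia.
  by rewrite /EH_list size_cat !size_map size_iota; lia.
have H2 : cEH a 1 (2 * r * s) <= s%:R * t.
  apply: nth_sort_le; first lia.
  apply: (leq_trans (n := (s * count (fun z => (z <= t)%R) (EH_list a 1 (2 * r)))%N)).
    by rewrite [X in (X <= _)%N]mulnC; exact: leq_mul (leqnn s) Ht.
  rewrite /EH_list !count_cat !count_map mulnDr.
  by apply: leq_add; apply: block_count; rewrite ?lexx ?ltW.
rewrite /cEHbar -/t.
have -> : (2 * r * s).+1./2 = (r * s)%N.
  by rewrite -mulnA mul2n; exact: uphalf_double.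
have -> : (2 * r).+1./2 = r.
  by rewrite mul2n; exact: uphalf_double.
have pi0 := pi_gt0 R.
have rR : 0 < r%:R :> R by rewrite ltr0n.
have sR : 0 < s%:R :> R by rewrite ltr0n.
rewrite natrM.
apply: (le_trans (y := s%:R * t / (r%:R * s%:R * pi))).
  by apply: ler_wpM2r => //; rewrite invr_ge0 ltW // !mulr_gt0.
by rewrite (@simp_aux R t s%:R r%:R pi) // lt0r_neq0.
Qed.
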